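(* Fix any integer $d\geq 3$, any prime power $q$, any group $\Gamma$, and a set $S\subseteq[d-1]$ with $|S|\geq 2$. Let $s$ be any face of $\mathcal{B}^{d,S}_q$ of co-dimension at least $3$. Then the $1$-cohomology of the link $\mathcal{B}^{d,S}_{q,s}$ with respect to $\Gamma$ is trivial; that is, every $f\in C^1(\mathcal{B}^{d,S}_{q,s},\Gamma)$ with $\delta f\equiv\mathrm{id}$ is of the form $f=\delta g$ for some $g:\mathcal{B}^{d,S}_{q,s}(0)\to\Gamma$.
   Context: For $S=\{s_1<\dots<s_m\}\subseteq[d-1]$, $\mathcal{B}^{d,S}_q$ is the simplicial complex whose vertices are the subspaces of $\mathbb{F}_q^d$ with dimension in $S$ and whose top faces are the chains $W_1\subset\cdots\subset W_m$ with $\dim W_i=s_i$ (faces are subsets of top faces). The co-dimension of a face $s$ is $|S|-|s|$, and $\mathcal{B}^{d,S}_{q,s}=\{t\setminus s: t\supseteq s\}$ is its link. $C^1(X,\Gamma)$ is the set of functions $f$ on ordered edges $(u,v)$ of $X$ with $f(u,v)=f(v,u)^{-1}$; $\delta f(u,v,w)=f(u,v)f(v,w)f(w,u)$ on triangles; $\delta g(u,v)=g(u)g(v)^{-1}$ for $g$ on vertices. *)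

(* Defs.v *)
From HB Require Import structures.
From mathcomp Require Import all_boot all_order all_algebra all_field.
From mathcomp Require Import monoid.
Set Implicit Arguments. Unset Strict Implicit. Unset Printing Implicit Defensive.

(* Vertices of B^{d,S}_q : subspaces of F^d (F a finite field with q elements)
   whose dimension lies in S.  A face is a finite set of vertices (given as a
   duplicate-free list) contained in a chain W_1 < ... < W_m with dim W_i = s_i,
   i.e. a set of vertices pairwise comparable under inclusion. *)

Section Building.
Variables (F : finFieldType) (d : nat) (S : seq nat).

Definition vtx := {vspace 'rV[F]_d}.

Definition is_vertex (U : vtx) : bool := \dim U \in S.

Definition is_face (s : seq vtx) : bool :=
  [&& uniq s, all is_vertex s &
      all (fun U => all (fun W => (U <= W)%VS || (W <= U)%VS) s) s].

Definition codim (s : seq vtx) : nat := size S - size s.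

(* the link B^{d,S}_{q,s} = { t \ s : t face, t ⊇ s } *)
Definition link_vertex (s : seq vtx) (u : vtx) : Prop :=
  u \notin s /\ is_face (u :: s).
Definition link_edge (s : seq vtx) (u v : vtx) : Prop :=
  u \notin s /\ v \notin s /\ is_face (u :: v :: s).
Definition link_triangle (s : seq vtx) (u v w : vtx) : Prop :=
  [/\ u \notin s, v \notin s, w \notin s & is_face (u :: v :: w :: s)].
End Building.

Local Open Scope group_scope.

Definition is_cochain1 {V : Type} {G : groupType}
  (edge : V -> V -> Prop) (f : V -> V -> G) : Prop :=
  forall u v, edge u v -> f u v = (f v u)^-1.

Definition is_cocycle1 {V : Type} {G : groupType}
  (tri : V -> V -> V -> Prop) (f : V -> V -> G) : Prop :=
  forall u v w, tri u v w -> f u v * f v w * f w u = 1.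

Definition is_coboundary1 {V : Type} {G : groupType}
  (vert : V -> Prop) (edge : V -> V -> Prop) (f : V -> V -> G) : Prop :=
  exists g : V -> G, forall u v, edge u v -> f u v = g u * (g v)^-1.

(* Main.v *)
Require Import Defs.
From mathcomp Require Import all_boot all_order all_algebra all_field.
From mathcomp Require Import monoid.
From Stdlib Require Import Classical ClassicalEpsilon.
From mathcomp Require Import zify.
Set Implicit Arguments. Unset Strict Implicit. Unset Printing Implicit Defensive.


Section Abstract.
Local Open Scope group_scope.
Variables (V : Type) (G : groupType) (adj : V -> V -> Prop).
Hypothesis adj_sym : forall u v, adj u v -> adj v u.

Inductive reach (P : V -> Prop) (x : V) : V -> Prop :=
 | reach0 : reach P x x
 | reachS y z : reach P x y -> P z -> adj y z -> reach P x z.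

Definition conn (P : V -> Prop) := forall x y, P x -> P y -> reach P x y.

Definition H1 (P : V -> Prop) := forall f : V -> V -> G,
  (forall u v, P u -> P v -> adj u v -> f u v = (f v u)^-1) ->
  (forall u v w, P u -> P v -> P w -> adj u v -> adj v w -> adj u w ->
     f u v * f v w * f w u = 1) ->
  exists g : V -> G, forall u v, P u -> P v -> adj u v -> f u v = g u * (g v)^-1.

Lemma reach_P P x y : reach P x y -> P x -> P y.
Proof. by elim=> // y0 z _ _ Pz _. Qed.

Lemma reach_trans P x y z : reach P x y -> reach P y z -> reach P x z.
Proof. move=> rxy; elim=> // y0 z0 _ IH Pz a; exact: reachS IH Pz a. Qed.

Lemma reach_step P x y : P y -> adj x y -> reach P x y.
Proof. move=> Py a; exact: reachS (reach0 P x) Py a. Qed.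

Lemma reach_sym P x y : reach P x y -> P x -> reach P y x.
Proof.
elim=> [|y0 z r IH Pz a] Px; first exact: reach0.
apply: reach_trans (IH Px).
apply: reach_step; [exact: reach_P r Px| exact: adj_sym].
Qed.

Lemma reach_mono (P Q : V -> Prop) x y : (forall z, P z -> Q z) -> reach P x y -> reach Q x y.
Proof. move=> PQ; elim=> [|y0 z _ IH Pz a]; [exact: reach0| exact: reachS IH (PQ _ Pz) a]. Qed.

Lemma conn_ext (P Q : V -> Prop) : (forall z, P z <-> Q z) -> conn P -> conn Q.
Proof.
move=> PQ cP x y Qx Qy; apply: (reach_mono (P:=P)); first by move=> z /PQ.
by apply: cP; apply/PQ.
Qed.

Lemma conn_star2 (P : V -> Prop) h : P h ->
  (forall w, P w -> w = h \/ adj h w \/ exists w', P w' /\ adj h w' /\ adj w' w) ->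
  conn P.
Proof.
move=> Ph H.
have rh : forall w, P w -> reach P h w.
  move=> w Pw; case: (H w Pw) => [->|[a|[w' [Pw' [a1 a2]]]]]; first exact: reach0.
    exact: reach_step.
  exact: reachS (reach_step Pw' a1) Pw a2.
move=> x y Px Py; apply: reach_trans (rh y Py).
exact: reach_sym (rh x Px) Ph.
Qed.

Lemma H1_ext (P Q : V -> Prop) : (forall z, P z <-> Q z) -> H1 P -> H1 Q.
Proof.
move=> PQ HP f h1 h2; have [g Hg] := HP f
  (fun u v Pu Pv => h1 u v (proj1 (PQ u) Pu) (proj1 (PQ v) Pv))
  (fun u v w Pu Pv Pw => h2 u v w (proj1 (PQ u) Pu) (proj1 (PQ v) Pv) (proj1 (PQ w) Pw)).
by exists g => u v /PQ Pu /PQ Pv; apply: Hg.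
Qed.

Lemma H1_triv (P : V -> Prop) : (forall u v, P u -> P v -> ~ adj u v) -> H1 P.
Proof. by move=> H f _ _; exists (fun _ => 1) => u v Pu Pv a; case: (H u v Pu Pv a). Qed.

Lemma H1_add (P Q : V -> Prop) :
  (forall v, P v -> Q v) ->
  (forall u v, Q u -> Q v -> ~ P u -> ~ P v -> ~ adj u v) ->
  (forall v, Q v -> ~ P v -> conn (fun w => P w /\ adj v w)) ->
  H1 P -> H1 Q.
Proof.
move=> PQ anti cn HP f h1 h2.
have [g Hg] := HP f (fun u v Pu Pv => h1 u v (PQ _ Pu) (PQ _ Pv))
   (fun u v w Pu Pv Pw => h2 u v w (PQ _ Pu) (PQ _ Pv) (PQ _ Pw)).
have ex : forall v, exists x : G, (P v -> x = g v) /\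
   (~ P v -> Q v -> forall w, P w -> adj v w -> x = f v w * g w).
  move=> v; case: (classic (P v)) => Pv.
    by exists (g v); split=> // /(_ Pv).
  case: (classic (exists w, P w /\ adj v w)) => [[w0 [Pw0 a0]]|nw]; last first.
    by exists 1; split=> // _ _ w Pw a; case: nw; exists w.
  exists (f v w0 * g w0); split=> // _ Qv w Pw a.
  have := cn v Qv Pv w0 w (conj Pw0 a0) (conj Pw a).
  elim=> // y z r IH [Pz az] ayz; rewrite IH.
  have [Py ay] := reach_P r (conj Pw0 a0).
  have e := h2 v y z Qv (PQ _ Py) (PQ _ Pz) ay ayz az.
  have e2 : f v z = f v y * f y z.
    by rewrite (h1 v z Qv (PQ _ Pz) az) -(mulg1_eq e) invgK.
  by rewrite e2 (Hg y z Py Pz ayz) -!mulgA mulVg mulg1.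
pose g' v := proj1_sig (constructive_indefinite_description _ (ex v)).
have g'P v : (P v -> g' v = g v) /\ (~ P v -> Q v -> forall w, P w -> adj v w -> g' v = f v w * g w).
  exact: proj2_sig (constructive_indefinite_description _ (ex v)).
exists g' => u v Qu Qv a.
case: (classic (P u)) => Pu; case: (classic (P v)) => Pv.
- by rewrite (g'P u).1 // (g'P v).1 //; apply: Hg.
- rewrite (g'P u).1 // ((g'P v).2 Pv Qv u Pu (adj_sym a)).
  by rewrite invgM mulgA mulgV mul1g h1.
- by rewrite (g'P v).1 // ((g'P u).2 Pu Qu v Pv a) mulgK.
- by case: (anti u v Qu Qv Pu Pv a).
Qed.

End Abstract.

Section Geo.
Variables (F : finFieldType) (d : nat).
Local Notation vt := (vtx F d).

Definition comp (U W : vt) : bool := (U <= W)%VS || (W <= U)%VS.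
Definition vadj (U W : vt) : Prop := U <> W /\ comp U W.

Lemma vadj_sym U W : vadj U W -> vadj W U.
Proof. by case=> ne; rewrite /comp orbC; split=> // e; apply: ne. Qed.

Lemma sub_dim_eq (U W : vt) : (U <= W)%VS -> \dim W <= \dim U -> U = W.
Proof. by move=> s1 s2; apply/eqP; rewrite eqEdim s1 s2. Qed.

Lemma comp_dim_eq (U W : vt) : comp U W -> \dim U = \dim W -> U = W.
Proof.
case/orP=> s e; first by apply: sub_dim_eq; rewrite ?e.
by symmetry; apply: sub_dim_eq; rewrite ?e.
Qed.

Lemma comp_lt (U W : vt) : comp U W -> \dim U < \dim W -> (U <= W)%VS.
Proof.
case/orP=> // s lt; have := dimvS s; by rewrite leqNgt lt.
Qed.

Lemma dim_addline_le (U : vt) v : \dim (U + <[v]>) <= (\dim U).+1.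
Proof.
apply: leq_trans (dimv_add_leqif U <[v]>) _.
by rewrite dim_vline addnC; case: (v != 0)%R.
Qed.

Lemma dim_addline (U : vt) v : v \notin U -> \dim (U + <[v]>) = (\dim U).+1.
Proof.
move=> vU.
have v0 : (v != 0)%R by apply: contraNneq vU => ->; rewrite mem0v.
have cap0 : (U :&: <[v]> = 0)%VS.
  apply/eqP; rewrite -dimv_eq0.
  have : \dim (U :&: <[v]>) <= 1.
    by apply: leq_trans (dimvS (capvSr U <[v]>)) _; rewrite dim_vline v0.
  case e: (\dim _) => [//|[|//]] _.
  have e2 : (U :&: <[v]>)%VS = <[v]>%VS.
    by apply: sub_dim_eq; rewrite ?capvSr // e dim_vline v0.
  by move: vU; rewrite memvE -e2 capvSl.
by rewrite dimv_disjoint_sum // dim_vline v0 addn1.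
Qed.

Lemma mid_ex (U W : vt) k : (U <= W)%VS -> \dim U <= k -> k <= \dim W ->
  exists R : vt, [/\ (U <= R)%VS, (R <= W)%VS & \dim R = k].
Proof.
move=> sUW.
move e : (k - \dim U) => n; elim: n U sUW e => [|n IH] U sUW e h1 h2.
  by exists U; split=> //; apply/eqP; rewrite eqn_leq h1 -subn_eq0 e.
have ne : ~~ (W <= U)%VS.
  apply/negP => sWU; have eUW := sub_dim_eq sUW (dimvS sWU).
  move: e h2; rewrite eUW => e h2.
  have : k - \dim W = 0 by apply/eqP; rewrite subn_eq0.
  by rewrite e.
have [v vW vU] := subvPn ne.
have s1 : (U + <[v]> <= W)%VS by rewrite subv_add sUW -memvE.
have s2 : k - \dim (U + <[v]>) = n by rewrite dim_addline // subnS e.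
have s3 : \dim (U + <[v]>) <= k by rewrite dim_addline // -subn_gt0 e.
have [R [h3 h4 h5]] := IH (U + <[v]>)%VS s1 s2 s3 h2.
by exists R; split=> //; apply: subv_trans h3; apply: addvSl.
Qed.

Lemma dimf : \dim (fullv : vt) = d.
Proof. by rewrite dimvf /dim /= mul1n. Qed.

End Geo.

Section Link.
Variables (F : finFieldType) (d : nat) (S : seq nat) (s : seq (vtx F d)).
Local Notation vt := (vtx F d).
Hypothesis hs : is_face S s.

Definition lv (U : vt) : Prop := link_vertex S s U.

Lemma comp_sym (U W : vt) : comp U W = comp W U.
Proof. by rewrite /comp orbC. Qed.

Lemma comp_refl (U : vt) : comp U U.
Proof. by rewrite /comp subvv. Qed.

Lemma face_iff (l : seq vt) : is_face S l <->
  [/\ uniq l, forall U, U \in l -> \dim U \in S &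
      forall U W, U \in l -> W \in l -> comp U W].
Proof.
rewrite /is_face; split.
  case/and3P=> u /allP a /allP c; split=> // U W hU hW.
  by have /allP := c U hU; apply.
case=> u a c; apply/and3P; split=> //; first by apply/allP.
by apply/allP=> U hU; apply/allP=> W hW; apply: c.
Qed.

Lemma face_cons (U : vt) l : is_face S l -> U \notin l -> \dim U \in S ->
  (forall W, W \in l -> comp U W) -> is_face S (U :: l).
Proof.
case/face_iff=> u a c nU dU cU; apply/face_iff; split.
- by rewrite /= nU.
- by move=> X; rewrite inE => /orP[/eqP->|]; [|apply: a].
move=> X Y; rewrite !inE => /orP[/eqP->|hX] /orP[/eqP->|hY].
- exact: comp_refl.
- exact: cU.
- by rewrite comp_sym; apply: cU.
- exact: c.
Qed.

Lemma s_comp (W W' : vt) : W \in s -> W' \in s -> comp W W'.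
Proof. by case/face_iff: hs => _ _ c; apply: c. Qed.

Lemma s_dim (W : vt) : W \in s -> \dim W \in S.
Proof. by case/face_iff: hs => _ a _; apply: a. Qed.

Lemma lv_iff (U : vt) : lv U <-> [/\ U \notin s, \dim U \in S & forall W, W \in s -> comp U W].
Proof.
split.
  case=> nU /face_iff [_ a c]; split=> //; first by apply: a; rewrite inE eqxx.
  by move=> W hW; apply: c; rewrite inE ?eqxx ?hW ?orbT.
by case=> nU dU cU; split=> //; apply: face_cons.
Qed.

Lemma lv_comp (U W : vt) : lv U -> W \in s -> comp U W.
Proof. by case/lv_iff=> _ _ c; apply: c. Qed.

Lemma lv_S (U : vt) : lv U -> \dim U \in S.
Proof. by case/lv_iff. Qed.

Lemma lv_notdim (U W : vt) : lv U -> W \in s -> \dim W != \dim U.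
Proof.
move=> lU hW; apply/negP=> /eqP e.
have := comp_dim_eq (lv_comp lU hW); rewrite e => /(_ erefl) eUW.
by case/lv_iff: lU; rewrite eUW hW.
Qed.

Lemma edge_iff (u v : vt) : link_edge S s u v <-> lv u /\ lv v /\ vadj u v.
Proof.
split.
  case=> nu [nv /face_iff [uq a c]].
  have lu : lv u.
    apply/lv_iff; split=> //; first by apply: a; rewrite inE eqxx.
    by move=> W hW; apply: c; rewrite !inE ?eqxx ?hW ?orbT.
  have lvv : lv v.
    apply/lv_iff; split=> //; first by apply: a; rewrite !inE eqxx orbT.
    by move=> W hW; apply: c; rewrite !inE ?eqxx ?hW ?orbT.
  split=> //; split=> //; split.
    by move=> e; move: uq; rewrite e /= inE eqxx.
  by apply: c; rewrite !inE eqxx ?orbT.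
case=> lu [lvv [ne cuv]]; case/lv_iff: (lu) => nu du cu.
case/lv_iff: (lvv) => nv dv cv; split=> //; split=> //.
apply: face_cons => //; first by case: lvv.
  by rewrite inE negb_or nu andbT; apply/eqP.
by move=> W; rewrite inE => /orP[/eqP->|]; [|apply: cu].
Qed.

Lemma tri_of (u v w : vt) : lv u -> lv v -> lv w -> vadj u v -> vadj v w -> vadj u w ->
  link_triangle S s u v w.
Proof.
move=> lu lvv lw [nuv cuv] [nvw cvw] [nuw cuw].
case/lv_iff: (lu) => nu du cu; case/lv_iff: (lvv) => nv dv cv.
case/lv_iff: (lw) => nw dw cw; split=> //.
have fw : is_face S (w :: s) by case: lw.
have fvw : is_face S (v :: w :: s).
  apply: face_cons => //; first by rewrite inE negb_or nv andbT; apply/eqP.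
  by move=> W; rewrite inE => /orP[/eqP->|]; [|apply: cv].
apply: face_cons => //.
  by rewrite !inE !negb_or nu andbT; apply/andP; split; apply/eqP.
by move=> W; rewrite !inE => /orP[/eqP->|/orP[/eqP->|]]; [| |apply: cu].
Qed.

Definition Tset := [seq t <- S | t \notin [seq \dim W | W <- s]].

Lemma lv_T (U : vt) : lv U -> \dim U \in Tset.
Proof.
move=> lU; rewrite mem_filter lv_S // andbT.
apply/negP => /mapP [W hW e]; by have := lv_notdim lU hW; rewrite e eqxx.
Qed.

Lemma exL t : 0 < t -> exists L : vt, [/\ L = 0%VS \/ L \in s, \dim L < t &
  forall W, W \in s -> \dim W < t -> (W <= L)%VS].
Proof.
move=> t0.
suff : forall l : seq vt, {subset l <= s} -> exists L : vt, [/\ L = 0%VS \/ L \in s, \dim L < t &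
  forall W, W \in l -> \dim W < t -> (W <= L)%VS] by apply; move=> x.
elim=> [|W l IH] sub.
  by exists 0%VS; split=> //; [left | rewrite dimv0].
have [|L [hL dL aL]] := IH; first by move=> x hx; apply: sub; rewrite inE hx orbT.
have Ws : W \in s by apply: sub; rewrite inE eqxx.
case: (ltnP (\dim W) t) => dW; last first.
  exists L; split=> // X; rewrite inE => /orP[/eqP->|]; last exact: aL.
  by rewrite ltnNge dW.
have [sWL|sLW] : (W <= L)%VS \/ (L <= W)%VS.
- case: hL => [->|Ls]; first by right; apply: sub0v.
  by have /orP[] := s_comp Ws Ls; [left|right].
- exists L; split=> // X; rewrite inE => /orP[/eqP->|]; [by [] | exact: aL].
- exists W; split=> //; first by right.
  move=> X; rewrite inE => /orP[/eqP->|hX dX]; first by rewrite subvv.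
  exact: subv_trans (aL X hX dX) sLW.
Qed.

Lemma exH t : t < d -> exists H : vt, [/\ H = fullv \/ H \in s, t < \dim H &
  forall W, W \in s -> t < \dim W -> (H <= W)%VS].
Proof.
move=> td.
suff : forall l : seq vt, {subset l <= s} -> exists H : vt, [/\ H = fullv \/ H \in s, t < \dim H &
  forall W, W \in l -> t < \dim W -> (H <= W)%VS] by apply; move=> x.
elim=> [|W l IH] sub.
  by exists fullv; split=> //; [left | rewrite dimf].
have [|H [hH dH aH]] := IH; first by move=> x hx; apply: sub; rewrite inE hx orbT.
have Ws : W \in s by apply: sub; rewrite inE eqxx.
case: (ltnP t (\dim W)) => dW; last first.
  exists H; split=> // X; rewrite inE => /orP[/eqP->|]; last exact: aH.
  by rewrite ltnNge dW.
have [sWH|sHW] : (W <= H)%VS \/ (H <= W)%VS.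
- case: hH => [->|Hs]; first by left; apply: subvf.
  by have /orP[] := s_comp Ws Hs; [left|right].
- exists W; split=> //; first by right.
  move=> X; rewrite inE => /orP[/eqP->|hX dX]; first by rewrite subvv.
  exact: subv_trans sWH (aH X hX dX).
- exists H; split=> // X; rewrite inE => /orP[/eqP->|]; [by [] | exact: aH].
Qed.

End Link.


Section Arith.
Lemma ar_a (A i k : nat) : A + 2 = k.+1 -> i <= 1 -> A + i <= k. Proof. lia. Qed.
Lemma ar_b (a tw tv i k : nat) : 3*(a-tw) + i <= k -> 3*(a-tv) + 2 = k.+1 -> tw <= a -> tv <= a -> tv <= tw. Proof. lia. Qed.
Lemma ar_c (A k : nat) : A + 1 = k.+1 -> A + 0 <= k. Proof. lia. Qed.
Lemma ar_d (a tw tv k : nat) : 3*(a-tw) + 0 <= k -> 3*(a-tv) + 1 = k.+1 -> tw <= a -> tv <= a -> tv <= tw. Proof. lia. Qed.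
Lemma ar_e (a tY tv k : nat) : 3*(a-tv) + 1 = k.+1 -> tv.+1 <= tY -> tv < a -> 3*(a-tY) + 2 <= k. Proof. lia. Qed.
Lemma ar_f (a tv k : nat) : 3*(a-tv) + 0 = k.+1 -> tv <= a -> tv < a. Proof. lia. Qed.
Lemma ar_g (a tR tv i k : nat) : i <= 2 -> 3*(a-tv) + 0 = k.+1 -> tv.+1 <= tR -> tv < a -> 3*(a-tR) + i <= k. Proof. lia. Qed.
Lemma ar_h (a tw tv i k : nat) : 3*(a-tw) + i <= k -> 3*(a-tv) + 0 = k.+1 -> tw <= a -> tv <= a -> tv < tw. Proof. lia. Qed.
Lemma ar_i (a b c : nat) : a < b -> b < c -> a.+2 <= c. Proof. lia. Qed.
Lemma ar_j (a tw i : nat) : 3*(a-tw) + i <= 0 -> a <= tw. Proof. lia. Qed.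
Lemma ar_k (a tw i : nat) : 3*(a-tw) + i <= 0 -> i = 0. Proof. lia. Qed.
Lemma ar_l (a tu tv iu iv k : nat) : 3*(a-tu) + iu = k.+1 -> 3*(a-tv) + iv = k.+1 -> iu <= 2 -> iv <= 2 -> iu = iv. Proof. lia. Qed.
Lemma ar_m (a tw i : nat) : i <= 2 -> tw <= a -> 3*(a-tw) + i <= 3*a+2. Proof. lia. Qed.
Lemma ar_n (p x y n : nat) : p - x <= n.+1 -> x < y -> p - y <= n. Proof. lia. Qed.
End Arith.

Section Core.
Variables (F : finFieldType) (d : nat) (S : seq nat) (s : seq (vtx F d)).
Local Notation vt := (vtx F d).
Hypothesis hs : is_face S s.
Local Notation lv := (lv S s).
Local Notation T := (Tset S s).
Variables (L H : nat -> vt).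
Hypothesis hL : forall t, t \in T -> [/\ L t = 0%VS \/ L t \in s, \dim (L t) < t &
  forall W, W \in s -> \dim W < t -> (W <= L t)%VS].
Hypothesis hH : forall t, t \in T -> [/\ H t = fullv \/ H t \in s,
  t < \dim (H t) & forall W, W \in s -> t < \dim W -> (H t <= W)%VS].

Lemma cmpL t U : t \in T -> lv U -> comp U (L t).
Proof.
move=> tT lU; have [[->|Ls] _ _] := hL tT; last exact: (lv_comp hs) lU Ls.
by rewrite /comp sub0v orbT.
Qed.

Lemma cmpH t U : t \in T -> lv U -> comp U (H t).
Proof.
move=> tT lU; have [[->|Hs] _ _] := hH tT; last exact: (lv_comp hs) lU Hs.
by rewrite /comp subvf.
Qed.

Lemma dimL t : t \in T -> \dim (L t) < t.
Proof. by move=> tT; case: (hL tT). Qed.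

Lemma dimH t : t \in T -> t < \dim (H t).
Proof. by move=> tT; case: (hH tT). Qed.

Lemma Lsub t U : t \in T -> lv U -> t <= \dim U -> (L t <= U)%VS.
Proof.
move=> tT lU le; have := cmpL tT lU; rewrite /comp => /orP[s1|//].
have := leq_ltn_trans (dimvS s1) (dimL tT); by rewrite ltnNge le.
Qed.

Lemma Hsup t U : t \in T -> lv U -> \dim U <= t -> (U <= H t)%VS.
Proof.
move=> tT lU le; have := cmpH tT lU; rewrite /comp => /orP[//|s1].
have := leq_trans (dimH tT) (dimvS s1); by rewrite ltnNge le.
Qed.

Lemma LH t : t \in T -> (L t <= H t)%VS.
Proof.
move=> tT; have [[->|Ls] dL _] := hL tT; have [[->|Hs] dH aH] := hH tT; rewrite ?sub0v ?subvf //.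
case/orP: (s_comp hs Ls Hs) => // sHL.
by have := ltn_trans dH (leq_ltn_trans (dimvS sHL) dL); rewrite ltnn.
Qed.

Lemma HH p q : p \in T -> q \in T -> p <= q -> (H p <= H q)%VS.
Proof.
move=> pT qT le; have [_ _ aH] := hH pT.
have [[->|Hs] dH _] := hH qT; first exact: subvf.
by apply: aH => //; apply: leq_trans dH.
Qed.

Lemma vchar t (R : vt) : t \in T -> \dim R = t -> (L t <= R)%VS -> (R <= H t)%VS -> lv R.
Proof.
move=> tT dR sL sH; have [_ _ aL] := hL tT; have [_ _ aH] := hH tT.
move: (tT); rewrite mem_filter => /andP[nd tS].
apply/(lv_iff hs); split.
- apply/negP=> Rs; move/negP: nd; apply; apply/mapP; by exists R.
- by rewrite dR.
move=> W Ws; rewrite /comp.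
case: (ltngtP (\dim W) t) => c.
- by rewrite (subv_trans (aL W Ws c) sL) orbT.
- by rewrite (subv_trans sH (aH W Ws c)).
- by move/negP: nd; case; apply/mapP; exists W.
Qed.

Lemma Ex t (P Q : vt) : t \in T -> (P <= Q)%VS -> (P <= H t)%VS -> (L t <= Q)%VS ->
  \dim (P + L t) <= t -> t <= \dim (Q :&: H t) ->
  exists R, [/\ lv R, \dim R = t, (P <= R)%VS & (R <= Q)%VS].
Proof.
move=> tT sPQ sPH sLQ d1 d2.
have s1 : (P + L t <= Q :&: H t)%VS.
  by rewrite subv_add !subv_cap sPQ sPH sLQ LH.
have [R [h1 h2 h3]] := mid_ex s1 d1 d2.
exists R; split=> //.
- apply: (vchar tT h3); first by apply: subv_trans (addvSr _ _) h1.
  by apply: subv_trans h2 (capvSr _ _).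
- by apply: subv_trans (addvSl _ _) h1.
- by apply: subv_trans h2 (capvSl _ _).
Qed.

Lemma capH t U : t \in T -> lv U -> t <= \dim U -> t <= \dim (U :&: H t).
Proof.
move=> tT lU le; have := cmpH tT lU; rewrite /comp => /orP[s1|s1].
  by rewrite (capv_idPl s1).
by rewrite (capv_idPr s1); apply: ltnW; apply: dimH.
Qed.

Lemma addL t U : t \in T -> lv U -> (U + L t = U)%VS \/ (U + L t = L t)%VS.
Proof.
move=> tT lU; have := cmpL tT lU; rewrite /comp => /orP[s1|s1].
  by right; apply/addv_idPr.
by left; apply/addv_idPl.
Qed.


Lemma neq_dim (U W : vt) : \dim U != \dim W -> U <> W.
Proof. by move=> h e; move: h; rewrite e eqxx. Qed.

Lemma vadj_sub (U W : vt) : (U <= W)%VS -> \dim U != \dim W -> vadj U W.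
Proof. by move=> sUW h; split; [apply: neq_dim | rewrite /comp sUW]. Qed.

Lemma vadj_sup (U W : vt) : (W <= U)%VS -> \dim U != \dim W -> vadj U W.
Proof. by move=> sUW h; split; [apply: neq_dim | rewrite /comp sUW orbT]. Qed.

Section Conn2.
Variables (p q : nat) (P Q : vt).
Hypotheses (pq : p < q) (pT : p \in T) (qT : q \in T) (sPQ : (P <= Q)%VS)
  (sPH : (P <= H p)%VS) (sLQ : (L q <= Q)%VS) (dPL : \dim (P + L p) <= p)
  (dQH : q <= \dim (Q :&: H q)).

Definition SetP (R : vt) := [/\ lv R, \dim R = p \/ \dim R = q, (P <= R)%VS & (R <= Q)%VS].

Lemma toP R : SetP R -> exists R', [/\ SetP R', \dim R' = p & R' = R \/ vadj R R'].
Proof.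
case=> lR [dR|dR] sP sQ; first by exists R; split=> //; [split=> //; left | left].
have [R' [lR' dR' s1 s2]] : exists R', [/\ lv R', \dim R' = p, (P <= R')%VS & (R' <= R)%VS].
  have pR : p <= \dim R by rewrite dR ltnW.
  exact: Ex pT sP sPH (Lsub pT lR pR) dPL (capH pT lR pR).
exists R'; split=> //; first by split=> //; [left | apply: subv_trans s2 sQ].
right; apply: vadj_sup => //; rewrite dR dR'; apply/eqP => e; have := pq; by rewrite e ltnn.
Qed.

Lemma exstep R1 R2 : SetP R1 -> SetP R2 -> \dim R1 = p -> \dim R2 = p -> R1 <> R2 ->
  exists R3, [/\ SetP R3, \dim R3 = p, \dim (R1 :&: R2) < \dim (R3 :&: R2),
     reach (@vadj F d) SetP R1 R3 & \dim (R1 :&: R2) < p].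
Proof.
case=> lR1 _ sP1 sQ1 [lR2 _ sP2 sQ2] d1 d2 ne.
have nsub : ~~ (R2 <= R1)%VS.
  by apply/negP => s21; apply: ne; symmetry; apply: sub_dim_eq s21 _; rewrite d1 d2.
have [v vR2 vR1] := subvPn nsub.
set D := (R1 :&: R2)%VS.
have dD : \dim D < p.
  rewrite ltnNge; apply/negP => le; apply: ne.
  have eD : D = R1 by apply: sub_dim_eq; [apply: capvSl | rewrite d1].
  apply: sub_dim_eq; last by rewrite d1 d2.
  by rewrite -eD capvSr.
have p0 : 0 < p by apply: leq_ltn_trans (leq0n _) dD.
have dD' : \dim D <= p.-1 by rewrite -ltnS prednK.
have [Z [sDZ sZR1 dZ]] := mid_ex (capvSl R1 R2) dD' (leq_trans (leq_pred p) (eq_leq (esym d1))).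
have vZ : v \notin Z by apply: contra vR1; rewrite !memvE => h; apply: subv_trans h sZR1.
set R3 := (Z + <[v]>)%VS.
have dR3 : \dim R3 = p by rewrite /R3 dim_addline // dZ prednK.
have HpR1 : (R1 <= H p)%VS by apply: Hsup => //; rewrite d1.
have HpR2 : (R2 <= H p)%VS by apply: Hsup => //; rewrite d2.
have vR2' : (<[v]> <= R2)%VS by rewrite -memvE.
have lR3 : lv R3.
  apply: (vchar pT dR3).
    apply: subv_trans (addvSl _ _); apply: subv_trans sDZ.
    by rewrite subv_cap !Lsub // ?d1 ?d2.
  by rewrite subv_add (subv_trans sZR1 HpR1) (subv_trans vR2' HpR2).
have sPD : (P <= D)%VS by rewrite subv_cap sP1 sP2.
have SR3 : SetP R3.
  split=> //; first by left.
    by apply: subv_trans (addvSl _ _); apply: subv_trans sDZ.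
  by rewrite subv_add (subv_trans sZR1 sQ1) (subv_trans vR2' sQ2).
have dinc : \dim D < \dim (R3 :&: R2).
  have vD : v \notin D by apply: contra vR1; rewrite !memvE => h; apply: subv_trans h (capvSl _ _).
  rewrite -(dim_addline vD); apply: dimvS.
  rewrite subv_add !subv_cap; apply/andP; split; apply/andP; split => //.
  - exact: subv_trans sDZ (addvSl _ _).
  - exact: capvSr.
  - exact: addvSr.
have s13 : (R1 + R3 <= R1 + <[v]>)%VS by rewrite subv_add addvSl /R3 subv_add (subv_trans sZR1 (addvSl _ _)) addvSr.
have d13 : \dim (R1 + R3) <= p.+1 by rewrite -d1; apply: leq_trans (dimvS s13) (dim_addline_le _ _).
have HqR : (R1 + R3 <= H q)%VS.
  by rewrite subv_add !(subv_trans _ (HH pT qT (ltnW pq))) // (Hsup pT lR3) ?dR3.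
have dsum : \dim (R1 + R3 + L q) <= q.
  have [e1|e1] := addL qT lR1.
    have : (L q <= R1 + R3)%VS by apply: subv_trans (addvSl _ _); apply/addv_idPl.
    by move/addv_idPl => ->; apply: leq_trans d13 pq.
  have [e3|e3] := addL qT lR3.
    have : (L q <= R1 + R3)%VS by apply: subv_trans (addvSr _ _); apply/addv_idPl.
    by move/addv_idPl => ->; apply: leq_trans d13 pq.
  have : (R1 + R3 <= L q)%VS by rewrite subv_add; apply/andP; split; apply/addv_idPr.
  by move/addv_idPr => ->; apply: ltnW; apply: dimL.
have [_ _ _ sQ3] := SR3.
have s1Q : (R1 + R3 <= Q)%VS by rewrite subv_add sQ1 sQ3.
have [Y [lY dY sY1 sY2]] := Ex qT s1Q HqR sLQ dsum dQH.
have pqne : p != q by rewrite neq_ltn pq.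
have SY : SetP Y.
  split=> //; first by right.
  exact: subv_trans sP1 (subv_trans (addvSl _ _) sY1).
exists R3; split=> //.
apply: reachS (reach_step SY _) SR3 _.
  by apply: vadj_sub; [apply: subv_trans (addvSl _ _) sY1 | rewrite d1 dY].
by apply: vadj_sup; [apply: subv_trans (addvSr _ _) sY1 | rewrite dR3 dY eq_sym].
Qed.

Lemma exch n R1 R2 : p - \dim (R1 :&: R2) <= n -> SetP R1 -> SetP R2 ->
  \dim R1 = p -> \dim R2 = p -> reach (@vadj F d) SetP R1 R2.
Proof.
elim: n R1 R2 => [|n IH] R1 R2 hn S1 S2 d1 d2.
  case: (classic (R1 = R2)) => [->|ne]; first exact: reach0.
  have [R3 [_ _ _ _ lt]] := exstep S1 S2 d1 d2 ne.
  by move: hn; rewrite leqn0 subn_eq0 leqNgt lt.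
case: (classic (R1 = R2)) => [->|ne]; first exact: reach0.
have [R3 [S3 d3 inc r13 lt]] := exstep S1 S2 d1 d2 ne.
apply: reach_trans r13 (IH R3 R2 _ S3 S2 d3 d2).
exact: ar_n hn inc.
Qed.

Lemma conn2 : conn (@vadj F d) SetP.
Proof.
move=> x y Sx Sy.
have [x' [Sx' dx' ex]] := toP Sx; have [y' [Sy' dy' ey]] := toP Sy.
have r1 : reach (@vadj F d) SetP x x'.
  by case: ex => [->|a]; [apply: reach0 | apply: reach_step].
have r2 : reach (@vadj F d) SetP y' y.
  by case: ey => [->|a]; [apply: reach0 | apply: reach_step => //; apply: vadj_sym].
apply: reach_trans r1 (reach_trans (exch (leqnn _) Sx' Sy' dx' dy') r2).
Qed.


End Conn2.

Section Tier.
Variable (G : groupType).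
Variables (a b c : nat) (X0 : vt).
Hypotheses (aT : a \in T) (bT : b \in T) (cT : c \in T) (ab : a < b) (bc : b < c)
  (lX0 : lv X0) (dX0 : \dim X0 = a).
Local Notation adj := (@vadj F d).

Definition P3 (U : vt) := lv U /\ (\dim U = a \/ \dim U = b \/ \dim U = c).
Definition tier (U : vt) := \dim (U :&: X0).
Definition idx (U : vt) := if \dim U == a then 0 else if \dim U == b then 1 else 2.
Definition key (U : vt) := 3 * (a - tier U) + idx U.
Definition Pk k (U : vt) := P3 U /\ key U <= k.

Lemma tier_le (U : vt) : tier U <= a.
Proof. by rewrite /tier -dX0 dimvS // capvSr. Qed.

Lemma tier_mono (U W : vt) : (U <= W)%VS -> tier U <= tier W.
Proof. by move=> sUW; rewrite /tier dimvS // capvS. Qed.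

Lemma tier_eq (U W : vt) : (U <= W)%VS -> tier W <= tier U -> (W :&: X0 <= U)%VS.
Proof.
move=> sUW le.
have e : (U :&: X0 = W :&: X0)%VS by apply: sub_dim_eq => //; apply: capvS.
by rewrite -e capvSl.
Qed.

Lemma tier_a (U : vt) : a <= tier U -> (X0 <= U)%VS.
Proof.
move=> le; have e : (U :&: X0 = X0)%VS by apply: sub_dim_eq; rewrite ?capvSr ?dX0.
by rewrite -e capvSl.
Qed.

Lemma tier_up (U : vt) x : x \in X0 -> x \notin U -> \dim ((U :&: X0) + <[x]>) = (tier U).+1.
Proof.
move=> xX xU; rewrite dim_addline //; apply: contra xU.
by rewrite !memvE => h; apply: subv_trans h (capvSl _ _).
Qed.

Lemma idx_a (U : vt) : \dim U = a -> idx U = 0.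
Proof. by rewrite /idx => ->; rewrite eqxx. Qed.
Lemma idx_b (U : vt) : \dim U = b -> idx U = 1.
Proof. by rewrite /idx => ->; rewrite eqxx (gtn_eqF ab). Qed.
Lemma idx_c (U : vt) : \dim U = c -> idx U = 2.
Proof. by rewrite /idx => ->; rewrite (gtn_eqF bc) (gtn_eqF (ltn_trans ab bc)). Qed.

Lemma P3_dim_eq (U W : vt) : P3 U -> P3 W -> idx U = idx W -> \dim U = \dim W.
Proof.
case=> _ [dU|[dU|dU]] [_ [dW|[dW|dW]]];
  rewrite ?(idx_a dU) ?(idx_b dU) ?(idx_c dU) ?(idx_a dW) ?(idx_b dW) ?(idx_c dW) //;
  by rewrite dU dW.
Qed.

Lemma P3_idx (U : vt) : P3 U -> idx U <= 2.
Proof. by case=> _ [dU|[dU|dU]]; rewrite ?(idx_a dU) ?(idx_b dU) ?(idx_c dU). Qed.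

Lemma link_c (v : vt) k : P3 v -> \dim v = c -> key v = k.+1 ->
  conn adj (fun w => Pk k w /\ adj v w).
Proof.
move=> P3v dv kv; have lv_ := P3v.1.
have ac : a < c := ltn_trans ab bc.
have bv : b <= \dim v by rewrite dv ltnW.
have av : a <= \dim v by rewrite dv ltnW.
have aX : a <= \dim X0 by rewrite dX0.
have C2 : conn adj (SetP a b (v :&: X0)%VS v).
  apply: conn2 => //.
  - by apply: subv_trans (capvSr _ _) _; apply: Hsup; rewrite ?dX0.
  - exact: Lsub bT lv_ bv.
  - have : (L a <= v :&: X0)%VS by rewrite subv_cap (Lsub aT lv_ av) (Lsub aT lX0 aX).
    move/addv_idPl => ->; rewrite -dX0; apply: dimvS; exact: capvSr.
  - exact: capH bT lv_ bv.
apply: (conn_ext _ C2).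
move: kv; rewrite /key (idx_c dv) => kv.
move=> w; split.
  case=> lw dw sP sQ.
  have dwne : \dim w != c by case: dw => ->; rewrite ?(ltn_eqF ac) ?(ltn_eqF bc).
  have e : tier w = tier v.
    apply/eqP; rewrite eqn_leq tier_mono //= /tier; apply: dimvS.
    by rewrite subv_cap sP capvSr.
  have iw : idx w <= 1 by case: dw => h; rewrite ?(idx_a h) ?(idx_b h).
  split; last by apply: vadj_sup => //; rewrite dv eq_sym.
  split; first by split=> //; case: dw; [left | right; left].
  rewrite /key e; exact: ar_a kv iw.
case=> [[[lw dw] kw] [nvw cvw]].
have dwc : \dim w != c.
  by apply/eqP => e; apply: nvw; apply: comp_dim_eq cvw _; rewrite dv e.
have dwl : \dim w < c.
  by case: dw => [->|[->|e]] //; rewrite e eqxx in dwc.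
have swv : (w <= v)%VS by apply: comp_lt; [rewrite comp_sym | rewrite dv].
have tle : tier v <= tier w.
  move: kw; rewrite /key => kw; exact: ar_b kw kv (tier_le w) (tier_le v).
split=> //.
- by case: dw => [h|[h|h]]; [left|right|rewrite h eqxx in dwc].
- by apply: tier_eq.
Qed.

Lemma ne_ab : a != b. Proof. by rewrite ltn_eqF. Qed.
Lemma ne_bc : b != c. Proof. by rewrite ltn_eqF. Qed.
Lemma ne_ac : a != c. Proof. by rewrite ltn_eqF // (ltn_trans ab bc). Qed.

Lemma XH t : t \in T -> a <= t -> (X0 <= H t)%VS.
Proof. by move=> tT le; apply: Hsup => //; rewrite dX0. Qed.

Lemma link_b (v : vt) k : P3 v -> \dim v = b -> key v = k.+1 ->
  conn adj (fun w => Pk k w /\ adj v w).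
Proof.
move=> P3v dv kv; have lv_ := P3v.1.
have ac : a < c := ltn_trans ab bc.
move: kv; rewrite /key (idx_b dv) => kv.
have av : a <= \dim v by rewrite dv ltnW.
have aX : a <= \dim X0 by rewrite dX0.
have hXH : (v :&: X0 <= H a)%VS by apply: subv_trans (capvSr _ _) (XH aT (leqnn a)).
have dPL : \dim ((v :&: X0) + L a) <= a.
  have : (L a <= v :&: X0)%VS by rewrite subv_cap (Lsub aT lv_ av) (Lsub aT lX0 aX).
  move/addv_idPl => ->; rewrite -dX0; apply: dimvS; exact: capvSr.
have [Xv [lXv dXv s1 s2]] := Ex aT (capvSl v X0) hXH (Lsub aT lv_ av) dPL (capH aT lv_ av).
have tXv : tier Xv = tier v.
  apply/eqP; rewrite eqn_leq tier_mono //= /tier; apply: dimvS.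
  by rewrite subv_cap s1 capvSr.
have LXv : Pk k Xv /\ adj v Xv.
  split; first by split; [split=> //; left | rewrite /key (idx_a dXv) tXv; exact: ar_c kv].
  by apply: vadj_sup => //; rewrite dv dXv eq_sym ne_ab.
apply: (conn_star2 (@vadj_sym F d) LXv).
move=> w [[[lw dw] kw] [nvw cvw]].
case: dw => [dwa|[dwb|dwc]].
- have swv : (w <= v)%VS by apply: comp_lt; [rewrite comp_sym | rewrite dv dwa].
  have tle : tier v <= tier w.
    move: kw; rewrite /key (idx_a dwa) => kw; exact: ar_d kw kv (tier_le w) (tier_le v).
  have svw := tier_eq swv tle.
  case: (ltnP (tier v) a) => tva; last first.
    have X0v := tier_a tva.
    have X0vX : (X0 <= v :&: X0)%VS by rewrite subv_cap X0v subvv.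
    have -> : w = X0 by symmetry; apply: sub_dim_eq; [apply: subv_trans X0vX svw | rewrite dwa dX0].
    have -> : Xv = X0 by symmetry; apply: sub_dim_eq; [apply: subv_trans X0vX s1 | rewrite dXv dX0].
    by left.
  have nX0v : ~~ (X0 <= v)%VS.
    apply/negP => X0v; move: tva; rewrite /tier (capv_idPr X0v) dX0 ltnn.
    done.
  have [x xX xv] := subvPn nX0v.
  have xX' : (<[x]> <= X0)%VS by rewrite -memvE.
  have sPH : (v + <[x]> <= H c)%VS.
    rewrite subv_add (Hsup cT lv_) ?dv ?(ltnW bc) //.
    exact: subv_trans xX' (XH cT (ltnW ac)).
  have dPc : \dim (v + <[x]> + L c) <= c.
    have [e|e] := addL cT lv_.
      have : (L c <= v + <[x]>)%VS by apply: subv_trans (addvSl _ _); apply/addv_idPl.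
      move/addv_idPl => ->; apply: leq_trans (dim_addline_le _ _) _; by rewrite dv.
    have vL : (v <= L c)%VS by apply/addv_idPr.
    have [e2|e2] := addL cT lX0.
      have vX : (v <= X0)%VS by apply: subv_trans vL _; apply/addv_idPl.
      by have := dimvS vX; rewrite dv dX0 leqNgt ab.
    have XL : (X0 <= L c)%VS by apply/addv_idPr.
    have : (v + <[x]> <= L c)%VS by rewrite subv_add vL (subv_trans xX' XL).
    by move/addv_idPr => ->; apply: ltnW; apply: dimL.
  have dQH : c <= \dim (fullv :&: H c) by rewrite capfv; apply: ltnW; apply: dimH.
  have [Y [lY dY sY _]] := Ex cT (subvf _) sPH (subvf _) dPc dQH.
  have vY : (v <= Y)%VS by apply: subv_trans (addvSl _ _) sY.
  have tY : (tier v).+1 <= tier Y.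
    rewrite -(tier_up xX xv); apply: dimvS.
    rewrite subv_add (capvS vY (subvv _)) subv_cap xX' andbT.
    by apply: subv_trans (addvSr _ _) sY.
  right; right; exists Y; split.
    split; first by split; [split=> //; right; right | rewrite /key (idx_c dY); exact: ar_e kv tY tva].
    by apply: vadj_sub => //; rewrite dv dY ne_bc.
  split.
    by apply: vadj_sub; [apply: subv_trans s2 vY | rewrite dXv dY ne_ac].
  by apply: vadj_sup; [apply: subv_trans swv vY | rewrite dY dwa eq_sym ne_ac].
- by case: nvw; apply: comp_dim_eq cvw _; rewrite dv dwb.
- have svw : (v <= w)%VS by apply: comp_lt cvw _; rewrite dv dwc.
  by right; left; apply: vadj_sub; [apply: subv_trans s2 svw | rewrite dXv dwc ne_ac].
Qed.

Lemma link_a (v : vt) k : P3 v -> \dim v = a -> key v = k.+1 ->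
  conn adj (fun w => Pk k w /\ adj v w).
Proof.
move=> P3v dv kv; have lv_ := P3v.1.
have ac : a < c := ltn_trans ab bc.
move: kv; rewrite /key (idx_a dv) => kv.
have tva : tier v < a by exact: ar_f kv (tier_le v).
have bnd : forall (Pp : vt) t, t \in T -> (v <= Pp)%VS -> (Pp <= v + X0)%VS ->
    \dim (Pp + L t) <= maxn (\dim Pp) (\dim (L t)).
  move=> Pp t tT vP PX.
  have [e|e] := addL tT lv_.
    have : (L t <= Pp)%VS by apply: subv_trans vP; apply/addv_idPl.
    by move/addv_idPl => ->; apply: leq_maxl.
  have vL : (v <= L t)%VS by apply/addv_idPr.
  have [e2|e2] := addL tT lX0.
    have vX : (v <= X0)%VS by apply: subv_trans vL _; apply/addv_idPl.
    have evX : v = X0 by apply: sub_dim_eq vX _; rewrite dv dX0.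
    by move: tva; rewrite /tier evX capvv dX0 ltnn.
  have XL : (X0 <= L t)%VS by apply/addv_idPr.
  have : (Pp <= L t)%VS by apply: subv_trans PX _; rewrite subv_add vL XL.
  by move/addv_idPr => ->; apply: leq_maxr.
pose Piece x := SetP b c (v + <[x]>)%VS fullv.
have tup : forall x (R : vt), x \in X0 -> x \notin v -> (v + <[x]> <= R)%VS ->
    (tier v).+1 <= tier R.
  move=> x R xX xv sR; rewrite -(tier_up xX xv); apply: dimvS.
  rewrite subv_add (capvS (subv_trans (addvSl _ _) sR) (subvv _)) subv_cap.
  by rewrite (subv_trans (addvSr _ _) sR) -memvE xX.
have piece_link : forall x, x \in X0 -> x \notin v -> forall R, Piece x R ->
    Pk k R /\ adj v R.
  move=> x xX xv R [lR dR sR _].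
  have := tup x R xX xv sR => tR.
  split.
    split; first by split=> //; right.
    rewrite /key; exact: ar_g (P3_idx (conj lR (or_intror dR))) kv tR tva.
  apply: vadj_sub; first by apply: subv_trans (addvSl _ _) sR.
  by case: dR => ->; rewrite dv ?ne_ab ?ne_ac.
have piece_conn : forall x, x \in X0 -> x \notin v -> conn adj (Piece x).
  move=> x xX xv; apply: conn2 => //.
  - rewrite subv_add (Hsup bT lv_) ?dv ?(ltnW ab) //.
    by rewrite -memvE; apply: (subvP (XH bT (ltnW ab))).
  - exact: subvf.
  - apply: leq_trans (bnd _ _ bT (addvSl _ _) _) _.
      by rewrite subv_add addvSl (subv_trans _ (addvSr _ _)) // -memvE.
    by rewrite geq_max (leq_trans (dim_addline_le _ _)) ?dv // ltnW // dimL.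
  - by rewrite capfv; apply: ltnW; apply: dimH.
have in_piece : forall w, Pk k w /\ adj v w -> exists x, [/\ x \in X0, x \notin v & Piece x w].
  move=> w [[[lw dw] kw] [nvw cvw]].
  have dwa : \dim w != a.
    by apply/eqP => e; apply: nvw; apply: comp_dim_eq cvw _; rewrite dv e.
  have dw' : \dim w = b \/ \dim w = c by case: dw => [e|//]; rewrite e eqxx in dwa.
  have vw : (v <= w)%VS.
    by apply: comp_lt cvw _; rewrite dv; case: dw' => ->.
  have tlt : tier v < tier w.
    move: kw; rewrite /key => kw; exact: ar_h kw kv (tier_le w) (tier_le v).
  have nsub : ~~ (w :&: X0 <= v)%VS.
    apply/negP => h; have : (w :&: X0 <= v :&: X0)%VS by rewrite subv_cap h capvSr.
    by move/dimvS; rewrite -/(tier w) -/(tier v) leqNgt tlt.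
  have [x xwX xv] := subvPn nsub.
  move: xwX; rewrite memv_cap => /andP[xw xX].
  exists x; split=> //; split=> //; last exact: subvf.
  by rewrite subv_add vw -memvE.
have common : forall x1 x2, x1 \in X0 -> x1 \notin v -> x2 \in X0 -> x2 \notin v ->
    exists Y, Piece x1 Y /\ Piece x2 Y.
  move=> x1 x2 x1X x1v x2X x2v.
  set Pp := (v + <[x1]> + <[x2]>)%VS.
  have vP : (v <= Pp)%VS by rewrite /Pp -addvA addvSl.
  have l1 : (<[x1]> <= X0)%VS by rewrite -memvE.
  have l2 : (<[x2]> <= X0)%VS by rewrite -memvE.
  have PX : (Pp <= v + X0)%VS.
    by rewrite /Pp !subv_add addvSl !(subv_trans _ (addvSr _ _)).
  have sPH : (Pp <= H c)%VS.
    apply: subv_trans PX _; rewrite subv_add (Hsup cT lv_) ?dv ?(ltnW ac) //.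
    exact: XH cT (ltnW ac).
  have dPc : \dim (Pp + L c) <= c.
    apply: leq_trans (bnd _ _ cT vP PX) _; rewrite geq_max (ltnW (dimL cT)) andbT.
    apply: leq_trans (dim_addline_le _ _) _.
    have : (\dim (v + <[x1]>)).+1 <= a.+2 by rewrite ltnS -dv dim_addline_le.
    move/leq_trans; apply; exact: ar_i ab bc.
  have dQH : c <= \dim (fullv :&: H c) by rewrite capfv; apply: ltnW; apply: dimH.
  have [Y [lY dY sY _]] := Ex cT (subvf _) sPH (subvf _) dPc dQH.
  exists Y; split; split=> //; try by right.
  - by apply: subv_trans sY; rewrite /Pp addvSl.
  - exact: subvf.
  - apply: subv_trans sY; rewrite subv_add vP; exact: addvSr.
  - exact: subvf.
move=> w1 w2 l1 l2.
have [x1 [x1X x1v P1]] := in_piece w1 l1.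
have [x2 [x2X x2v P2]] := in_piece w2 l2.
have [Y [Y1 Y2]] := common x1 x2 x1X x1v x2X x2v.
apply: reach_trans.
  exact: reach_mono (piece_link x1 x1X x1v) (piece_conn x1 x1X x1v w1 Y P1 Y1).
exact: reach_mono (piece_link x2 x2X x2v) (piece_conn x2 x2X x2v Y w2 Y2 P2).
Qed.

Lemma P3X0 : P3 X0. Proof. by split=> //; left. Qed.

Lemma H1_P3 : H1 G adj P3.
Proof.
have ac : a < c := ltn_trans ab bc.
have idxX0 : idx X0 = 0 := idx_a dX0.
have H0 : H1 G adj (Pk 0).
  apply: H1_triv => u v.
  suff E : forall w, Pk 0 w -> w = X0.
    by move=> /E -> /E -> [].
  move=> w [P3w kw].
  have tw : a <= tier w by move: kw; rewrite /key => kw; exact: ar_j kw.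
  have iw : idx w = 0 by move: kw; rewrite /key => kw; exact: ar_k kw.
  have dw : \dim w = \dim X0 by apply: P3_dim_eq => //; [apply: P3X0 | rewrite iw].
  by symmetry; apply: sub_dim_eq (tier_a tw) _; rewrite dw.
have step : forall k, H1 G adj (Pk k) -> H1 G adj (Pk k.+1).
  move=> k; apply: H1_add; first exact: (@vadj_sym F d).
  - by move=> w [h1 h2]; split=> //; apply: leqW.
  - move=> u v [Pu ku] [Pv kv] nu nv [ne cuv].
    have ku' : key u = k.+1.
      by apply/eqP; rewrite eqn_leq ku ltnNge; apply/negP => h; apply: nu.
    have kv' : key v = k.+1.
      by apply/eqP; rewrite eqn_leq kv ltnNge; apply/negP => h; apply: nv.
    have iu := P3_idx Pu; have iv := P3_idx Pv.
    have e : idx u = idx v by move: ku' kv'; rewrite /key => ku' kv'; exact: ar_l ku' kv' iu iv.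
    by apply: ne; apply: comp_dim_eq cuv (P3_dim_eq Pu Pv e).
  - move=> v [Pv kv] nv.
    have kv' : key v = k.+1.
      by apply/eqP; rewrite eqn_leq kv ltnNge; apply/negP => h; apply: nv.
    case: (Pv) => _ [dv|[dv|dv]].
    + exact: link_a.
    + exact: link_b.
    + exact: link_c.
have all : forall k, H1 G adj (Pk k).
  by elim=> [|k IH]; [exact: H0 | exact: step].
apply: (H1_ext _ (all (3 * a + 2))) => w; split; first by case.
move=> Pw; split=> //; rewrite /key; exact: ar_m (P3_idx Pw) (tier_le w).
Qed.

End Tier.
Section ExtB.
Variable (G : groupType).
Variables (a b c : nat) (X0 : vt).
Hypotheses (aT : a \in T) (bT : b \in T) (cT : c \in T) (ab : a < b) (bc : b < c)
  (lX0 : lv X0) (dX0 : \dim X0 = a)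
  (hmin : forall t, t \in T -> a <= t) (hmax : forall t, t \in T -> t <= c).
Local Notation adj := (@vadj F d).

Definition Pl (l : seq nat) (U : vt) := P3 a b c U \/ (lv U /\ \dim U \in l).

Lemma H1_lv : H1 G adj lv.
Proof.
have ac : a < c := ltn_trans ab bc.
suff : forall l, H1 G adj (Pl l).
  move/(_ S) => h; apply: (H1_ext _ h) => w; split; first by case=> [[]|[]].
  by move=> lw; right; split=> //; apply: lv_S lw.
elim=> [|t l IH].
  apply: (H1_ext _ (@H1_P3 G a b c X0 aT bT cT ab bc lX0 dX0)) => w; split; first by left.
  by case=> // [[]].
apply: H1_add IH; first exact: (@vadj_sym F d).
- by move=> w [h|[h1 h2]]; [left | right; split=> //; rewrite inE h2 orbT].
- have dimt : forall w, Pl (t :: l) w -> ~ Pl l w -> lv w /\ \dim w = t.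
    move=> w [h n|[lw]]; first by case: n; left.
    rewrite inE => /orP[/eqP e _|h n]; first by split.
    by case: n; right; split.
  move=> u v Pu Pv nu nv [ne cuv].
  have [_ du] := dimt u Pu nu; have [_ dv] := dimt v Pv nv.
  by apply: ne; apply: comp_dim_eq cuv _; rewrite du dv.
move=> v Pv nv.
have [lv_ dv] : lv v /\ \dim v = t.
  case: Pv => [h|[lw]]; first by case: nv; left.
  rewrite inE => /orP[/eqP e|h]; first by split.
  by case: nv; right; split.
have tT : \dim v \in T := lv_T hs lv_.
have nP3 : ~ P3 a b c v by move=> h; apply: nv; left.
have atv : a < \dim v.
  rewrite ltn_neqAle hmin // andbT; apply/eqP => e; apply: nP3; split=> //; left.
  by rewrite e.
have tvc : \dim v < c.
  by rewrite ltn_neqAle hmax // andbT; apply/eqP => e; apply: nP3; split=> //; right; right.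
have av : a <= \dim v := ltnW atv.
have dLa : \dim (L a + L a) <= a by rewrite addvv; apply: ltnW; apply: dimL.
have [X [lX dX _ sX]] := Ex aT (Lsub aT lv_ av) (LH aT) (Lsub aT lv_ av) dLa (capH aT lv_ av).
have dPc : \dim (v + L c) <= c.
  by have [e3|e3] := addL cT lv_; rewrite e3; [exact: ltnW tvc | exact: ltnW (dimL cT)].
have dQH : c <= \dim (fullv :&: H c) by rewrite capfv; apply: ltnW; apply: dimH.
have [Y [lY dY sY _]] := Ex cT (subvf v) (Hsup cT lv_ (ltnW tvc)) (subvf _) dPc dQH.
have LX : Pl l X /\ adj v X.
  split; first by left; split=> //; left.
  by apply: vadj_sup => //; rewrite dX gtn_eqF.
apply: (conn_star2 (@vadj_sym F d) LX).
move=> w [Pw [nvw cvw]].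
have lw : lv w by case: Pw => [[]|[]].
case: (ltngtP (\dim w) (\dim v)) => c1.
- have swv : (w <= v)%VS by apply: comp_lt; [rewrite comp_sym | ].
  right; right; exists Y; split.
    split; first by left; split=> //; right; right.
    by apply: vadj_sub => //; rewrite dY ltn_eqF.
  split; first by apply: vadj_sub; [apply: subv_trans sX sY | rewrite dX dY ltn_eqF].
  by apply: vadj_sup; [apply: subv_trans swv sY | rewrite dY gtn_eqF // (ltn_trans c1)].
- have svw : (v <= w)%VS by apply: comp_lt.
  right; left; apply: vadj_sub; first by apply: subv_trans sX svw.
  by rewrite dX ltn_eqF // (ltn_trans atv).
- by case: nvw; apply: comp_dim_eq cvw _; rewrite c1.
Qed.

End ExtB.

End Core.

Lemma ex_min (l : seq nat) : l != [::] -> exists a, a \in l /\ forall t, t \in l -> a <= t.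
Proof.
elim: l => [//|x l IH] _.
case: (altP (l =P [::])) => [->|ne].
  by exists x; split=> [|t]; rewrite ?inE ?eqxx // => /eqP ->.
have [a [al ha]] := IH ne.
exists (minn x a); split.
  by rewrite /minn; case: ltnP => _; rewrite inE ?eqxx ?al ?orbT.
by move=> t; rewrite inE => /orP[/eqP->|/ha h]; rewrite geq_min ?leqnn ?h ?orbT.
Qed.

Lemma ex_max (l : seq nat) : l != [::] -> exists a, a \in l /\ forall t, t \in l -> t <= a.
Proof.
elim: l => [//|x l IH] _.
case: (altP (l =P [::])) => [->|ne].
  by exists x; split=> [|t]; rewrite ?inE ?eqxx // => /eqP ->.
have [a [al ha]] := IH ne.
exists (maxn x a); split.
  by rewrite /maxn; case: ltnP => _; rewrite inE ?eqxx ?al ?orbT.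
by move=> t; rewrite inE => /orP[/eqP->|/ha h]; rewrite leq_max ?leqnn ?h ?orbT.
Qed.

Theorem lemma3p3 (d : nat) (F : finFieldType) (G : groupType) (S : seq nat)
  (hd : 3 <= d) (hSu : uniq S) (hSr : all (fun i => 0 < i < d) S)
  (hS2 : 2 <= size S)
  (s : seq (vtx F d)) (hs : is_face S s) (hcod : 3 <= codim S s)
  (f : vtx F d -> vtx F d -> G)
  (hf : is_cochain1 (link_edge S s) f)
  (hdf : is_cocycle1 (link_triangle S s) f) :
  is_coboundary1 (link_vertex S s) (link_edge S s) f.
Proof.
move: (hs) => /face_iff [uq_s dS cS].
set dims := [seq \dim W | W <- s].
have uq_d : uniq dims.
  rewrite map_inj_in_uniq // => W W' hW hW' e.
  exact: comp_dim_eq (s_comp hs hW hW') e.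
have cnt : count (mem dims) S = size s.
  rewrite -size_filter -(size_map (fun W : vtx F d => \dim W) s); apply: perm_size.
  apply: uniq_perm; rewrite ?filter_uniq // => x.
  rewrite mem_filter; apply/andP/idP => [[]//|h]; split=> //.
  by case/mapP: h => W hW ->; apply: dS.
have sizeT : 3 <= size (Tset S s).
  have e := count_predC (mem dims) S; rewrite cnt in e.
  rewrite /Tset size_filter.
  change (3 <= count (predC (mem dims)) S).
  by move: hcod; rewrite /codim -e addKn.
have uqT : uniq (Tset S s) by rewrite filter_uniq.
have neT : Tset S s != [::] by case: (Tset S s) sizeT.
have [a [aT amin]] := ex_min neT.
have [c [cT cmax]] := ex_max neT.
have [b [bT [nba nbc]]] : exists b, [/\ b \in Tset S s, b != a & b != c].
  apply: NNPP => nex.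
  have sub : {subset Tset S s <= [:: a; c]}.
    move=> x xT; rewrite !inE; apply/negPn/negP; rewrite negb_or => /andP[h1 h2].
    by apply: nex; exists x.
  by have := uniq_leq_size uqT sub; rewrite leqNgt => /negP; apply; apply: leq_trans sizeT.
have ab : a < b by rewrite ltn_neqAle eq_sym nba amin.
have bc : b < c by rewrite ltn_neqAle nbc cmax.
have Tbnd : forall t, t \in Tset S s -> 0 < t < d.
  by move=> t; rewrite mem_filter => /andP[_ tS]; apply: (allP hSr).
have exL' : forall t, exists L : vtx F d, t \in Tset S s -> [/\ L = 0%VS \/ L \in s, \dim L < t &
    forall W, W \in s -> \dim W < t -> (W <= L)%VS].
  move=> t; case: (boolP (t \in Tset S s)) => tT; last by exists 0%VS.
  have /andP[t0 _] := Tbnd t tT.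
  by have [L hL] := exL hs t0; exists L.
have exH' : forall t, exists H : vtx F d, t \in Tset S s -> [/\ H = fullv \/ H \in s, t < \dim H &
    forall W, W \in s -> t < \dim W -> (H <= W)%VS].
  move=> t; case: (boolP (t \in Tset S s)) => tT; last by exists 0%VS.
  have /andP[_ td] := Tbnd t tT.
  by have [H hH] := exH hs td; exists H.
pose L t := proj1_sig (constructive_indefinite_description _ (exL' t)).
pose H t := proj1_sig (constructive_indefinite_description _ (exH' t)).
have hL : forall t, t \in Tset S s -> [/\ L t = 0%VS \/ L t \in s, \dim (L t) < t &
    forall W, W \in s -> \dim W < t -> (W <= L t)%VS].
  by move=> t; exact: proj2_sig (constructive_indefinite_description _ (exL' t)).
have hH : forall t, t \in Tset S s -> [/\ H t = fullv \/ H t \in s, t < \dim (H t) &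
    forall W, W \in s -> t < \dim W -> (H t <= W)%VS].
  by move=> t; exact: proj2_sig (constructive_indefinite_description _ (exH' t)).
have dLa : \dim (L a + L a) <= a by rewrite addvv; apply: ltnW; apply: (dimL hL aT).
have dQH : a <= \dim (fullv :&: H a) by rewrite capfv; apply: ltnW; apply: (dimH hH aT).
have [X0 [lX0 dX0 _ _]] := Ex hs hL hH aT (subvf (L a)) (LH hs hL hH aT) (subvf (L a)) dLa dQH.
have h := H1_lv hs hL hH (G:=G) aT bT cT ab bc lX0 dX0 amin cmax.
have [g hg] := h f
  (fun u v lu lv a => hf u v ((edge_iff hs u v).2 (conj lu (conj lv a))))
  (fun u v w lu lv lw a1 a2 a3 => hdf u v w (tri_of hs lu lv lw a1 a2 a3)).
exists g => u v /(edge_iff hs u v) [lu [lv a']]; exact: hg.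
Qed.
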